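(* Let $S$ be a numerical semigroup with $m(S)=m$ and $g(S)=m+k_1$, where $m\ge 2k_1+2$, and let $(x_1,\ldots,x_{m-1})$ be the Kunz coordinate vector of $S$ with respect to $m$. Let $\overline{x}=(x_1,\ldots,x_{2k_1+1})$ and $g=g(S)$. Then \[e(S)=g-2k_1-1+a(\overline{x})+b(\overline{x})-c(\overline{x}).\]
   Context: A numerical semigroup $S$ is a submonoid of $\mathbb{N}_0$ with finite complement; $g(S)$ is the size of the complement, $m(S)$ the smallest nonzero element, and $e(S)$ the size of the minimal generating set $(S\setminus\{0\})\setminus((S\setminus\{0\})+(S\setminus\{0\}))$. For $m=m(S)$, the Apéry set $\{s\in S: s-m\notin S\}$ contains exactly one element $a_i$ in each residue class $i$ mod $m$; writing $a_i=k_im+i$ for $1\le i\le m-1$, the Kunz coordinate vector of $S$ with respect to $m$ is $(k_1,\ldots,k_{m-1})$ (each $k_i\ge1$). For a tuple $\overline{x}=(x_1,\ldots,x_t)$ of positive integers define $a(\overline{x})=\#\{i\in[1,t]: x_i=2\}$, $b(\overline{x})=\#\{i\in[1,t]: x_i=3\}$, and $c(\overline{x})=\#\{i\in[1,t]: \exists j_1,j_2\in[1,t] \text{ with } j_1+j_2=i,\ (x_{j_1},x_{j_2},x_i)=(1,1,2)\}$. *)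

(* Defs.v *)
From mathcomp Require Import all_boot all_algebra.
Set Implicit Arguments. Unset Strict Implicit. Unset Printing Implicit Defensive.

Definition numerical_semigroup (S : pred nat) : Prop :=
  S 0 /\ (forall a b, S a -> S b -> S (a + b)) /\
  exists N, forall n, N <= n -> S n.

Definition multiplicity_is (S : pred nat) (m : nat) : Prop :=
  0 < m /\ S m /\ forall n, 0 < n -> n < m -> ~~ S n.

Definition genus_is (S : pred nat) (g : nat) : Prop :=
  exists s : seq nat, uniq s /\ size s = g /\ forall n, (n \in s) = ~~ S n.

Definition min_generator (S : pred nat) (n : nat) : Prop :=
  S n /\ 0 < n /\
  ~ (exists a b, 0 < a /\ 0 < b /\ S a /\ S b /\ a + b = n).

Definition embdim_is (S : pred nat) (e : nat) : Prop :=
  exists s : seq nat, uniq s /\ size s = e /\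
    forall n, n \in s <-> min_generator S n.

(* x is the Kunz coordinate vector of S w.r.t. m (indices 1..m-1):
   a_i = x i * m + i is the Apery element in class i, i.e. a_i \in S and
   a_i - m \notin S (with x i >= 1). *)
Definition kunz_vector (S : pred nat) (m : nat) (x : nat -> nat) : Prop :=
  forall i, 1 <= i <= m - 1 ->
    0 < x i /\ S (x i * m + i) /\ ~~ S ((x i).-1 * m + i).

Definition cnt_a (t : nat) (x : nat -> nat) : nat :=
  count (fun i => x i == 2) (iota 1 t).
Definition cnt_b (t : nat) (x : nat -> nat) : nat :=
  count (fun i => x i == 3) (iota 1 t).
Definition cnt_c (t : nat) (x : nat -> nat) : nat :=
  count (fun i =>
    [&& x i == 2 &
        has (fun j1 => has (fun j2 =>
               [&& j1 + j2 == i, x j1 == 1 & x j2 == 1]) (iota 1 t)) (iota 1 t)])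
    (iota 1 t).

(* Main.v *)
Require Import Defs.
From mathcomp Require Import all_boot all_algebra zify.
Import GRing.Theory.
Set Implicit Arguments.
Unset Strict Implicit.

Lemma divmod_uniq q1 q2 r1 r2 m : r1 < m -> r2 < m -> q1 * m + r1 = q2 * m + r2 -> q1 = q2 /\ r1 = r2.
Proof.
move=> h1 h2 e.
have m0 : 0 < m by lia.
have := congr1 (divn^~ m) e; have := congr1 (modn^~ m) e.
rewrite /= !modnMDl !divnMDl // !modn_small // !divn_small // !addn0.
by move=> -> ->.
Qed.

Lemma S_addm (S : pred nat) m : (forall a b, S a -> S b -> S (a + b)) -> S m ->
  forall c n, S n -> S (n + c * m).
Proof.
move=> hadd hm; elim=> [|c IH] n hn; first by rewrite mul0n addn0.
by rewrite mulSn addnCA; apply: hadd => //; apply: IH.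
Qed.

Lemma memS (S : pred nat) m x : (forall a b, S a -> S b -> S (a + b)) -> S m ->
  kunz_vector S m x -> forall i k, 1 <= i <= m - 1 -> S (k * m + i) = (x i <= k).
Proof.
move=> hadd hm hk i k hi; have [h0 [h1 h2]] := hk i hi.
apply/idP/idP => [hS|hle].
  apply/negP => /negP; rewrite -ltnNge => hlt.
  move/negP: h2; apply.
  have -> : (x i).-1 * m + i = (k * m + i) + ((x i).-1 - k) * m.
    have -> : (x i).-1 = k + ((x i).-1 - k) by lia.
    rewrite mulnDl; lia.
  exact: S_addm.
have -> : k * m + i = (x i * m + i) + (k - x i) * m.
  have -> : k = x i + (k - x i) by lia.
  rewrite mulnDl; lia.
exact: S_addm.
Qed.

Lemma mulmS (S : pred nat) m : (forall a b, S a -> S b -> S (a + b)) -> S 0 -> S m ->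
  forall c, S (c * m).
Proof. move=> hadd h0 hm c; have := @S_addm S m hadd hm c 0 h0; by rewrite add0n. Qed.

Lemma sum_count (T : Type) (p : pred T) (s : seq T) : \sum_(i <- s) (p i : nat) = count p s.
Proof. by elim: s => [|a s IH]; rewrite ?big_nil ?big_cons ?IH. Qed.

Lemma gaps_count (S : pred nat) m x : (forall a b, S a -> S b -> S (a + b)) -> S 0 -> S m ->
  kunz_vector S m x -> 0 < m -> forall M,
  count (predC S) (iota 0 (M * m)) = \sum_(i <- iota 1 (m - 1)) minn (x i) M.
Proof.
move=> hadd h0 hm hk m0; elim=> [|M IH].
  by rewrite mul0n /= big1_seq // => i _; rewrite minn0.
rewrite mulSnr iotaD count_cat IH add0n.
have -> : \sum_(i <- iota 1 (m - 1)) minn (x i) M.+1 =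
          \sum_(i <- iota 1 (m - 1)) (minn (x i) M + (M < x i)).
  apply: eq_big_seq => i _; lia.
rewrite big_split /=; congr (_ + _).
rewrite sum_count -[M * m]addn0 iotaDl count_map.
have -> : iota 0 m = 0 :: iota 1 (m - 1) by case: (m) m0 => //= n _; rewrite subn1.
rewrite /= addn0 (mulmS hadd h0 hm) /= add0n.
apply: eq_in_count => i; rewrite mem_iota => hi /=.
rewrite (memS hadd hm hk) ?ltnNge //; lia.
Qed.

Lemma genus_sum (S : pred nat) m x g : numerical_semigroup S -> multiplicity_is S m ->
  kunz_vector S m x -> genus_is S g -> g = \sum_(i <- iota 1 (m - 1)) x i.
Proof.
move=> [h0 [hadd [N hN]]] [m0 [hm _]] hk [s [us [sz hs]]].
have NNm : N <= N * m by rewrite leq_pmulr.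
have pe : perm_eq s (filter (predC S) (iota 0 (N * m))).
  apply: uniq_perm => //; first by rewrite filter_uniq // iota_uniq.
  move=> n; rewrite mem_filter mem_iota hs /=.
  case Sn: (S n) => //=; apply/esym.
  case: (leqP N n) => hn; first by rewrite hN in Sn.
  lia.
rewrite -sz (perm_size pe) size_filter (gaps_count hadd h0 hm hk m0 N).
apply: eq_big_seq => i; rewrite mem_iota => hi.
have [h1 [_ h2]] := hk i ltac:(lia).
have : (x i).-1 * m + i < N.
  case: (leqP N ((x i).-1 * m + i)) => // hn; by rewrite hN in h2.
have : (x i).-1 <= (x i).-1 * m by rewrite leq_pmulr.
lia.
Qed.

Definition decb m (x : nat -> nat) i :=
  has (fun j => has (fun l => x j * m + j + (x l * m + l) == x i * m + i)
    (iota 1 (m - 1))) (iota 1 (m - 1)).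

Lemma geq_m (S : pred nat) m a : multiplicity_is S m -> S a -> 0 < a -> m <= a.
Proof.
move=> [_ [_ h]] Sa a0; case: (leqP m a) => // am.
by move: (h a a0 am); rewrite Sa.
Qed.

Lemma zero_res (S : pred nat) m x i a b : (forall a b, S a -> S b -> S (a + b)) -> S m ->
  kunz_vector S m x -> 1 <= i <= m - 1 -> S b -> a + b = x i * m + i -> a %% m = 0 -> a = 0.
Proof.
move=> hadd hm hk hi Sb eab am.
have [x1 _] := hk i hi.
have ea : a = a %/ m * m by rewrite {1}(divn_eq a m) am addn0.
set q := a %/ m in ea.
have qx : q <= x i by nia.
have eb : b = (x i - q) * m + i by rewrite mulnBl; nia.
move: Sb; rewrite eb (memS hadd hm hk) // => h.
have q0 : q = 0 by lia.
by rewrite ea q0.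
Qed.

Lemma apery_dec (S : pred nat) m x i a b : (forall a b, S a -> S b -> S (a + b)) -> S m ->
  kunz_vector S m x -> 1 <= i <= m - 1 -> S a -> S b -> 0 < a -> 0 < b ->
  a + b = x i * m + i -> decb m x i.
Proof.
move=> hadd hm hk hi Sa Sb a0 b0 eab.
have m0 : 0 < m by lia.
set j := a %% m; set l := b %% m.
have j0 : j != 0.
  apply/eqP => j0; have := zero_res hadd hm hk hi Sb eab j0; lia.
have l0 : l != 0.
  apply/eqP => l0; rewrite addnC in eab; have := zero_res hadd hm hk hi Sa eab l0; lia.
have jm : j < m by rewrite ltn_pmod.
have lm : l < m by rewrite ltn_pmod.
have ea : a = a %/ m * m + j by rewrite {1}(divn_eq a m).
have eb : b = b %/ m * m + l by rewrite {1}(divn_eq b m).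
set qa := a %/ m in ea; set qb := b %/ m in eb.
have hj : 1 <= j <= m - 1 by lia.
have hl : 1 <= l <= m - 1 by lia.
have xj : x j <= qa by rewrite -(memS hadd hm hk _ hj) -ea.
have xl : x l <= qb by rewrite -(memS hadd hm hk _ hl) -eb.
have Sw : S (x j * m + j + (x l * m + l)).
  by apply: (hadd); rewrite (memS hadd hm hk) //.
suff e : x j * m + j + (x l * m + l) = x i * m + i.
  apply/hasP; exists j; first by rewrite mem_iota; lia.
  apply/hasP; exists l; first by rewrite mem_iota; lia.
  by rewrite e.
have [x1 _] := hk i hi.
case: (ltnP (j + l) m) => hjl.
  have e1 : (qa + qb) * m + (j + l) = x i * m + i by rewrite mulnDl; lia.
  have [e2 e3] := divmod_uniq hjl (ltac:(lia) : i < m) e1.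
  have e4 : x j * m + j + (x l * m + l) = (x j + x l) * m + i by rewrite mulnDl; lia.
  move: Sw; rewrite e4 (memS hadd hm hk) // => h.
  have e5 : x j + x l = x i by lia.
  by rewrite e5.
have e1 : (qa + qb + 1) * m + (j + l - m) = x i * m + i by rewrite !mulnDl; lia.
have [e2 e3] := divmod_uniq (ltac:(lia) : j + l - m < m) (ltac:(lia) : i < m) e1.
have e4 : x j * m + j + (x l * m + l) = (x j + x l + 1) * m + i by rewrite !mulnDl; lia.
move: Sw; rewrite e4 (memS hadd hm hk) // => h.
have e5 : x j + x l + 1 = x i by lia.
by rewrite e5.
Qed.

Definition mgL m x := m :: [seq x i * m + i | i <- [seq i <- iota 1 (m - 1) | ~~ decb m x i]].

Lemma mem_mgL (S : pred nat) m x n : numerical_semigroup S -> multiplicity_is S m ->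
  kunz_vector S m x -> min_generator S n <-> n \in mgL m x.
Proof.
move=> [h0 [hadd _]] hmul hk; have [m0 [hm _]] := hmul.
split.
  move=> [Sn [n0 nd]].
  have en : n = n %/ m * m + n %% m by rewrite {1}(divn_eq n m).
  set q := n %/ m in en; set r := n %% m in en.
  have rm : r < m by rewrite ltn_pmod.
  clearbody q r.
  case: (posnP r) => r0.
    rewrite r0 addn0 in en.
    case: (ltnP 1 q) => q1.
      exfalso; apply: nd; exists m, ((q - 1) * m); split => //; split; first by nia.
      split => //; split; first exact: mulmS.
      rewrite en; nia.
    have q1' : q = 1 by nia.
    by rewrite en q1' mul1n in_cons eqxx.
  have hr : 1 <= r <= m - 1 by lia.
  have xr : x r <= q by rewrite -(memS hadd hm hk _ hr) -en.
  case: (ltnP (x r) q) => xq.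
    exfalso; apply: nd; exists m, ((q - 1) * m + r); split => //; split; first by rewrite addn_gt0 r0 orbT.
    split => //; split; first by rewrite (memS hadd hm hk) //; lia.
    rewrite en; have -> : q = (q - 1) + 1 by lia. rewrite mulnDl; lia.
  have eq : q = x r by lia.
  rewrite in_cons; apply/orP; right; apply/mapP; exists r; last by rewrite en eq.
  rewrite mem_filter mem_iota; apply/andP; split; last by lia.
  apply/negP => /hasP [j jI /hasP [l lI /eqP e]].
  move: jI lI; rewrite !mem_iota => jI lI.
  apply: nd; exists (x j * m + j), (x l * m + l).
  split; first by lia. split; first by lia.
  split; first by rewrite (memS hadd hm hk) //; lia.
  split; first by rewrite (memS hadd hm hk) //; lia.
  by rewrite e en eq.
rewrite in_cons => /orP [/eqP -> | /mapP [i]].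
  split => //; split => //.
  move=> [a [b [a0 [b0 [Sa [Sb e]]]]]].
  have := geq_m hmul Sa a0; have := geq_m hmul Sb b0; lia.
rewrite mem_filter mem_iota => /andP [nd hi] ->.
have hi' : 1 <= i <= m - 1 by lia.
split; first by rewrite (memS hadd hm hk).
split; first by lia.
move=> [a [b [a0 [b0 [Sa [Sb e]]]]]].
by move/negP: nd; apply; apply: (apery_dec hadd hm hk hi' Sa Sb a0 b0 e).
Qed.

Lemma uniq_mgL m x : 0 < m -> (forall i, 1 <= i <= m - 1 -> 0 < x i) -> uniq (mgL m x).
Proof.
move=> m0 hx; rewrite /mgL /=; apply/andP; split.
  apply/mapP => [[i]]; rewrite mem_filter mem_iota => /andP [_ hi] e.
  have := hx i ltac:(lia); nia.
rewrite map_inj_in_uniq ?filter_uniq ?iota_uniq // => i j.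
rewrite !mem_filter !mem_iota => /andP [_ hi] /andP [_ hj] e.
by have [_ ->] := divmod_uniq (ltac:(lia) : i < m) (ltac:(lia) : j < m) e.
Qed.

Lemma embdim_count (S : pred nat) m x e : numerical_semigroup S -> multiplicity_is S m ->
  kunz_vector S m x -> embdim_is S e -> e = 1 + count (fun i => ~~ decb m x i) (iota 1 (m - 1)).
Proof.
move=> hns hmul hk [s [us [sz hs]]].
have hx : forall i, 1 <= i <= m - 1 -> 0 < x i by move=> i hi; case: (hk i hi).
have pe : perm_eq s (mgL m x).
  apply: uniq_perm => //; first by apply: uniq_mgL => //; case: hmul.
  move=> n; apply/idP/idP => h.
    by apply/(mem_mgL n hns hmul hk); apply/hs.
  by apply/hs; apply/(mem_mgL n hns hmul hk).
by rewrite -sz (perm_size pe) /mgL /= size_map size_filter add1n.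
Qed.

Definition Kz m k1 (x : nat -> nat) :=
  [/\ (forall i, 1 <= i <= m - 1 -> 0 < x i),
      (forall j l, 1 <= j -> 1 <= l -> j + l <= m - 1 -> x (j + l) <= x j + x l),
      (forall j l, 1 <= j <= m - 1 -> 1 <= l <= m - 1 -> m < j + l -> x (j + l - m) <= x j + x l + 1),
      \sum_(1 <= i < m) (x i - 1) = k1.+1 & 2 * k1 + 2 <= m].

Lemma goodpair (P : pred nat) (p : nat -> nat) a b :
  \sum_(a <= j < b) P (p j) = \sum_(a <= j < b) P j ->
  2 * \sum_(a <= j < b) P j < b - a ->
  exists j, [/\ a <= j < b, ~~ P j & ~~ P (p j)].
Proof.
move=> hrev hlt.
case: (boolP (has (fun j => ~~ P j && ~~ P (p j)) (index_iota a b))).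
  by move=> /hasP [j]; rewrite mem_index_iota => hj /andP [h1 h2]; exists j.
move=> /hasPn hn; exfalso.
have : \sum_(j <- index_iota a b) 1 <= \sum_(j <- index_iota a b) (P j + P (p j)).
  rewrite big_seq [X in _ <= X]big_seq; apply: leq_sum => j hj.
  by move: (hn j hj); case: (P j); case: (P (p j)).
rewrite sum1_size size_iota big_split /= hrev; lia.
Qed.

Lemma exc m k1 x i : Kz m k1 x -> 1 <= i <= m - 1 ->
  \sum_(1 <= j < i) (1 < x j) + \sum_(i.+1 <= j < m) (1 < x j) + (x i - 1) <= k1.+1.
Proof.
move=> [hx _ _ hs _] hi.
rewrite -hs [X in _ <= X](@big_cat_nat _ _ _ i) /=; [|lia|lia].
rewrite [X in _ <= _ + X](big_ltn (ltac:(lia) : i < m)) /=.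
have le : forall a b, \sum_(a <= j < b) (1 < x j) <= \sum_(a <= j < b) (x j - 1).
  move=> a b; apply: leq_sum => j _; case: (ltnP 1 (x j)) => /= h; lia.
have := le 1 i; have := le i.+1 m; lia.
Qed.

Lemma rev1 (P : pred nat) i : \sum_(1 <= j < i) P (i - j) = \sum_(1 <= j < i) P j.
Proof.
rewrite [RHS]big_nat_rev; apply: eq_big_nat => j hj; congr (P _ : nat); lia.
Qed.

Lemma rev2 (P : pred nat) i m : \sum_(i.+1 <= j < m) P (m + i - j) = \sum_(i.+1 <= j < m) P j.
Proof.
rewrite [RHS]big_nat_rev; apply: eq_big_nat => j hj; congr (P _ : nat); lia.
Qed.

Lemma F3 m k1 x i : Kz m k1 x -> 1 <= i <= m - 1 -> x i = 2 -> 2 * k1 + 1 < i -> decb m x i.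
Proof.
move=> hK hi x2 ti; have := exc hK hi; case: hK => [hx _ _ _ _] he.
have [j [hj b1 b2]] := @goodpair (fun j => 1 < x j) (fun j => i - j) 1 i
  (rev1 (fun j => 1 < x j) i) ltac:(lia).
have xj : x j = 1 by have := hx j ltac:(lia); lia.
have xij : x (i - j) = 1 by have := hx (i - j) ltac:(lia); lia.
apply/hasP; exists j; first by rewrite mem_iota; lia.
apply/hasP; exists (i - j); first by rewrite mem_iota; lia.
rewrite xj xij x2 mul1n; apply/eqP; lia.
Qed.

Lemma F12 m k1 x i : Kz m k1 x -> 1 <= i <= m - 1 -> 3 <= x i ->
  [/\ x i = 3, decb m x i & i <= 2 * k1 + 1].
Proof.
move=> hK hi x3; have := exc hK hi; case: hK => [hx K1 K2 _ hm] he.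
have i1 : i - 1 <= 2 * \sum_(1 <= j < i) (1 < x j).
  case: (leqP (i - 1) (2 * \sum_(1 <= j < i) (1 < x j))) => h; first by [].
  have [j [hj b1 b2]] := @goodpair (fun j => 1 < x j) (fun j => i - j) 1 i
    (rev1 (fun j => 1 < x j) i) h.
  have xj : x j = 1 by have := hx j ltac:(lia); lia.
  have xij : x (i - j) = 1 by have := hx (i - j) ltac:(lia); lia.
  have := K1 j (i - j) ltac:(lia) ltac:(lia) ltac:(lia).
  have -> : j + (i - j) = i by lia.
  lia.
case: (leqP (m - i.+1) (2 * \sum_(i.+1 <= j < m) (1 < x j))) => h; first by lia.
have [j [hj b1 b2]] := @goodpair (fun j => 1 < x j) (fun j => m + i - j) i.+1 m
  (rev2 (fun j => 1 < x j) i m) h.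
have xj : x j = 1 by have := hx j ltac:(lia); lia.
have xij : x (m + i - j) = 1 by have := hx (m + i - j) ltac:(lia); lia.
have := K2 j (m + i - j) ltac:(lia) ltac:(lia) ltac:(lia).
have -> : j + (m + i - j) - m = i by lia.
rewrite xj xij => x3'.
have xi3 : x i = 3 by lia.
split => //; last by lia.
apply/hasP; exists j; first by rewrite mem_iota; lia.
apply/hasP; exists (m + i - j); first by rewrite mem_iota; lia.
rewrite xj xij xi3 mul1n; apply/eqP; lia.
Qed.

Definition cpred t (x : nat -> nat) i :=
  [&& x i == 2 &
        has (fun j1 => has (fun j2 =>
               [&& j1 + j2 == i, x j1 == 1 & x j2 == 1]) (iota 1 t)) (iota 1 t)].

Lemma F0 m k1 x i : Kz m k1 x -> 1 <= i <= m - 1 -> x i = 1 -> ~~ decb m x i.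
Proof.
move=> [hx _ _ _ _] hi x1; apply/hasPn => j; rewrite mem_iota => hj.
apply/hasPn => l; rewrite mem_iota => hl; rewrite x1 mul1n.
have := hx j ltac:(lia); have := hx l ltac:(lia) => a b.
apply/eqP; nia.
Qed.

Lemma F4 m k1 x i : Kz m k1 x -> 1 <= i <= m - 1 -> x i = 2 -> i <= 2 * k1 + 1 ->
  decb m x i = cpred (2 * k1 + 1) x i.
Proof.
move=> [hx _ _ _ hm] hi x2 it; rewrite /cpred x2 eqxx /=.
apply/hasP/hasP.
  move=> [j]; rewrite mem_iota => hj /hasP [l]; rewrite mem_iota => hl /eqP e.
  have a := hx j ltac:(lia); have b := hx l ltac:(lia).
  rewrite x2 in e.
  have xj : x j = 1.
    case: (ltnP 1 (x j)) => h; last by lia.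
    have : 2 * m <= x j * m by rewrite leq_mul2r; lia.
    have : m <= x l * m by rewrite leq_pmull.
    lia.
  have xl : x l = 1.
    case: (ltnP 1 (x l)) => h; last by lia.
    have : 2 * m <= x l * m by rewrite leq_mul2r; lia.
    have : m <= x j * m by rewrite leq_pmull.
    lia.
  rewrite xj xl mul1n in e.
  exists j; first by rewrite mem_iota; lia.
  apply/hasP; exists l; first by rewrite mem_iota; lia.
  rewrite xj xl !eqxx /= andbT; apply/eqP; lia.
move=> [j]; rewrite mem_iota => hj /hasP [l]; rewrite mem_iota => hl.
move=> /and3P [/eqP e /eqP xj /eqP xl].
exists j; first by rewrite mem_iota; lia.
apply/hasP; exists l; first by rewrite mem_iota; lia.
rewrite xj xl x2 mul1n; apply/eqP; lia.
Qed.

Lemma per_index m k1 x i : Kz m k1 x -> 1 <= i <= m - 1 ->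
  (x i - 1) + ((i <= 2 * k1 + 1) && cpred (2 * k1 + 1) x i) =
  decb m x i + ((i <= 2 * k1 + 1) && (x i == 2)) + ((i <= 2 * k1 + 1) && (x i == 3)).
Proof.
move=> hK hi; have hx := hK; case: hx => [hx _ _ _ _].
have := hx i hi.
case: (ltnP (x i) 3) => h3 h0.
  case: (ltnP (x i) 2) => h2.
    have x1 : x i = 1 by lia.
    by rewrite (negbTE (F0 hK hi x1)) /cpred x1 /= !andbF.
  have x2 : x i = 2 by lia.
  case: (leqP i (2 * k1 + 1)) => it.
    by rewrite (F4 hK hi x2 it) x2 /= addn0 addnC.
  by rewrite (F3 hK hi x2 it) x2 /=.
have [x3 dec it] := F12 hK hi h3.
by rewrite dec x3 it /cpred x3 /=.
Qed.

Lemma count_prefix t n (p : pred nat) : t <= n ->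
  count p (iota 1 t) = count (fun i => (i <= t) && p i) (iota 1 n).
Proof.
move=> tn; have -> : n = t + (n - t) by lia.
rewrite iotaD count_cat.
have -> : count (fun i => (i <= t) && p i) (iota (1 + t) (n - t)) = 0.
  rewrite (@eq_in_count _ _ pred0) ?count_pred0 // => i; rewrite mem_iota => hi /=.
  by have -> : (i <= t) = false by lia.
rewrite addn0; apply: eq_in_count => i; rewrite mem_iota => hi /=.
by have -> : (i <= t) = true by lia.
Qed.



Lemma core m k1 x : Kz m k1 x ->
  count (decb m x) (iota 1 (m - 1)) + cnt_a (2 * k1 + 1) x + cnt_b (2 * k1 + 1) x
  = k1.+1 + cnt_c (2 * k1 + 1) x.
Proof.
move=> hK; have hK' := hK; case: hK' => [_ _ _ hs hm].
have tm : 2 * k1 + 1 <= m - 1 by lia.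
rewrite /cnt_a /cnt_b /cnt_c !(count_prefix _ tm).
have E : \sum_(i <- iota 1 (m - 1)) ((x i - 1) + ((i <= 2 * k1 + 1) && cpred (2 * k1 + 1) x i)) =
         \sum_(i <- iota 1 (m - 1)) (decb m x i + ((i <= 2 * k1 + 1) && (x i == 2)) + ((i <= 2 * k1 + 1) && (x i == 3))).
  apply: eq_big_seq => i; rewrite mem_iota => hi.
  apply: (per_index hK); lia.
rewrite !big_split /= in E.
move: E; rewrite -!sum_count.
change (\sum_(i <- iota 1 (m - 1)) (x i - 1)) with (\sum_(1 <= i < m) (x i - 1)).
rewrite hs => ->.
done.
Qed.


Lemma kunzK1 (S : pred nat) m x : (forall a b, S a -> S b -> S (a + b)) -> S m ->
  kunz_vector S m x -> forall j l, 1 <= j -> 1 <= l -> j + l <= m - 1 -> x (j + l) <= x j + x l.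
Proof.
move=> hadd hm hk j l j1 l1 jl.
have Sw : S (x j * m + j + (x l * m + l)).
  by apply: (hadd); rewrite (memS hadd hm hk) //; lia.
have e : x j * m + j + (x l * m + l) = (x j + x l) * m + (j + l) by rewrite mulnDl; lia.
by move: Sw; rewrite e (memS hadd hm hk) //; lia.
Qed.

Lemma kunzK2 (S : pred nat) m x : (forall a b, S a -> S b -> S (a + b)) -> S m ->
  kunz_vector S m x -> forall j l, 1 <= j <= m - 1 -> 1 <= l <= m - 1 -> m < j + l ->
  x (j + l - m) <= x j + x l + 1.
Proof.
move=> hadd hm hk j l j1 l1 jl.
have Sw : S (x j * m + j + (x l * m + l)).
  by apply: (hadd); rewrite (memS hadd hm hk) //; lia.
have e : x j * m + j + (x l * m + l) = (x j + x l + 1) * m + (j + l - m) by rewrite !mulnDl; lia.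
by move: Sw; rewrite e (memS hadd hm hk) //; lia.
Qed.

Unset Implicit Arguments.
Set Strict Implicit.
Local Open Scope ring_scope.

Theorem proposition8p6 (S : pred nat) (m k1 g e : nat) (x : nat -> nat) :
  numerical_semigroup S ->
  multiplicity_is S m ->
  genus_is S g ->
  g = (m + k1)%N ->
  (2 * k1 + 2 <= m)%N ->
  kunz_vector S m x ->
  embdim_is S e ->
  (e%:Z = g%:Z - (2 * k1)%:Z - 1
          + (cnt_a (2 * k1 + 1) x)%:Z + (cnt_b (2 * k1 + 1) x)%:Z
          - (cnt_c (2 * k1 + 1) x)%:Z).
Proof.
move=> hns hmul hgen hg hm hk hemb.
have hns' := hns; case: hns' => [h0 [hadd _]].
have hmul' := hmul; case: hmul' => [m0 [Sm _]].
have gs := genus_sum hns hmul hk hgen.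
have hx : forall i, (1 <= i <= m - 1)%N -> (0 < x i)%N by move=> i hi; case: (hk i hi).
have hsum : (\sum_(1 <= i < m) (x i - 1) = k1.+1)%N.
  have E : (\sum_(i <- iota 1 (m - 1)) x i = \sum_(i <- iota 1 (m - 1)) ((x i - 1) + 1))%N.
    apply: eq_big_seq => i; rewrite mem_iota => hi; have := hx i ltac:(lia); lia.
  rewrite big_split /= sum1_size size_iota -gs hg in E.
  change (\sum_(1 <= i < m) (x i - 1))%N with (\sum_(i <- iota 1 (m - 1)) (x i - 1))%N.
  lia.
have hK : Kz m k1 x.
  split => //; [exact: kunzK1 hadd Sm hk | exact: kunzK2 hadd Sm hk].
have hc := core hK.
have he := embdim_count hns hmul hk hemb.
have he' : e = (1 + count (predC (decb m x)) (iota 1 (m - 1)))%N by rewrite he.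
have := count_predC (decb m x) (iota 1 (m - 1)); rewrite size_iota => hp.
lia.
Qed.
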